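(* Let $(TN,\mu)$ be a $T$-system. For a transition $t$ of $TN$ and a pre-place $q\in{}^\bullet t$ with $\mu(q)=0$ let $$en(TN,\mu)_q:=\{(\tau,\delta):\ \tau\in en(TN,\mu),\ \delta=(\tau,\dots,q,t)\subset TN \text{ an elementary path}\}.$$ (1) Let $t$ be a transition of $TN$ which is enabled at some marking reachable from $\mu$. Then for each pre-place $q\in{}^\bullet t$ with $\mu(q)=0$ there is a pair $(\tau,\delta)\in en(TN,\mu)_q$ with $\Vert\mu\Vert_\delta=0$. (2) Assume moreover that $(TN,\mu)$ is perpetual with regeneration cluster $cl$, and let $t_{cl}$ be the unique transition of $cl$. (i) For each transition $t$ of $TN$ having a pre-place $p\in{}^\bullet t$ with $\mu(p)=1$, and for each pre-place $q\in{}^\bullet t$ with $\mu(q)=0$, there is a pair $(\tau,\delta)\in en(TN,\mu)_q$ with $\Vert\mu\Vert_\delta=0$ and $t_{cl}\notin\delta_{seg}$, where $\delta_{seg}:=(\tau,\dots,q)$ is the segment of $\delta$ ending at $q$. (ii) Each elementary path $\delta\subset TN$ with $t_{cl}\notin\delta$ satisfies $\Vert\mu\Vert_\delta\le 1$.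
   Context: A net $N=(P,T,F)$: finite disjoint sets of places and transitions and edges $F\subset(P\times T)\cup(T\times P)$; nets are weakly connected. ${}^\bullet x$, $x^\bullet$ are pre-set and post-set. A $T$-net is a net in which every place has exactly one pre-transition and exactly one post-transition; a $T$-system is a pair $(TN,\mu)$ with $TN$ a $T$-net and $\mu$ a marking (a map from places to $\mathbb{N}$). A transition $t$ is enabled at $\mu$ if all places of ${}^\bullet t$ carry a token; firing removes one token from each pre-place and adds one to each post-place. $en(TN,\mu)$ is the set of transitions enabled at $\mu$; reachable markings are those obtained by firing finite sequences of successively enabled transitions. A path is a nonempty sequence of nodes $(x_1,\dots,x_n)$ with $(x_i,x_{i+1})\in F$; it is elementary if its nodes are pairwise distinct. For a set of nodes $X$ (e.g. the nodes of a path), $\Vert\mu\Vert_X=\sum_{p\in X\text{ place}}\mu(p)$. The cluster of a node $x$ is the smallest subnet containing $x$ containing $p^\bullet$ for each of its places $p$ and ${}^\bullet t$ for each of its transitions $t$; $\mu_{cl}$ is the marking equal to $1$ on the places of $cl$ and $0$ elsewhere. A Petri net $(N,\mu)$ is perpetual with regeneration cluster $cl$ if it is live and bounded and $\mu_{cl}$ is a home marking (reachable from every reachable marking). *)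

(* Defs.v *)
From mathcomp Require Import all_boot.
Set Implicit Arguments. Unset Strict Implicit. Unset Printing Implicit Defensive.

Section Nets.
(* A net N = (P,T,F): places P and transitions T are finite types (disjoint
   by construction, nodes are P + T); F is given by
   pt p t  <-> (p,t) in F   and   tp t p <-> (t,p) in F. *)
Variables (P T : finType) (pt : P -> T -> bool) (tp : T -> P -> bool).

Definition node := (P + T)%type.

Definition flow (x y : node) : bool :=
  match x, y with
  | inl p, inr t => pt p t
  | inr t, inl p => tp t p
  | _, _ => false
  end.

Definition weakly_connected : Prop :=
  forall x y : node, connect (fun a b => flow a b || flow b a) x y.

Definition is_Tnet : Prop :=
  weakly_connected /\
  forall p : P, #|[set t | tp t p]| = 1 /\ #|[set t | pt p t]| = 1.

Definition marking := {ffun P -> nat}.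

Definition enabled (m : marking) (t : T) : bool :=
  [forall p, pt p t ==> (0 < m p)].

Definition fire (m : marking) (t : T) : marking :=
  [ffun p => m p - pt p t + tp t p].

Inductive reachable (m : marking) : marking -> Prop :=
  | reach_refl : reachable m m
  | reach_step m' t : reachable m m' -> enabled m' t -> reachable m (fire m' t).

Definition is_path (d : seq node) : bool :=
  if d is x :: s then path flow x s else false.

Definition elementary_path (d : seq node) : bool := is_path d && uniq d.

Definition mnorm (m : marking) (d : seq node) : nat :=
  \sum_(p : P | inl p \in d) m p.

Definition en_q (m : marking) (q : P) (t : T) (tau : T) (d : seq node) : Prop :=
  enabled m tau /\ elementary_path d /\
  exists s, d = inr tau :: s ++ [:: inl q; inr t].

Definition cluster_closed (S : {set node}) : Prop :=
  (forall p t, inl p \in S -> pt p t -> inr t \in S) /\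
  (forall t p, inr t \in S -> pt p t -> inl p \in S).

Definition is_cluster_of (x : node) (cl : {set node}) : Prop :=
  x \in cl /\ cluster_closed cl /\
  forall S : {set node}, x \in S -> cluster_closed S -> cl \subset S.

Definition is_cluster (cl : {set node}) : Prop := exists x, is_cluster_of x cl.

Definition mu_cl (cl : {set node}) : marking := [ffun p => nat_of_bool (inl p \in cl)].

Definition live (m0 : marking) : Prop :=
  forall m, reachable m0 m -> forall t, exists m', reachable m m' /\ enabled m' t.

Definition bounded (m0 : marking) : Prop :=
  exists k, forall m, reachable m0 m -> forall p, m p <= k.

Definition home_marking (m0 h : marking) : Prop :=
  forall m, reachable m0 m -> reachable m h.

Definition perpetual (m0 : marking) (cl : {set node}) : Prop :=
  live m0 /\ bounded m0 /\ is_cluster cl /\ home_marking m0 (mu_cl cl).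

End Nets.

(* Main.v *)
Require Import Defs.
From mathcomp Require Import all_boot.
From mathcomp Require Import zify.
From Stdlib Require Import Classical_Prop.
Set Implicit Arguments. Unset Strict Implicit. Unset Printing Implicit Defensive.

Section Aux.
Variables (P T : finType) (pt : P -> T -> bool) (tp : T -> P -> bool) (pre post : P -> T).
Hypothesis hpre : forall p t, tp t p = (t == pre p).
Hypothesis hpost : forall p t, pt p t = (t == post p).

Local Notation node := (node P T).
Local Notation marking := (marking P).
Local Notation enabled := (enabled pt).
Local Notation fire := (fire pt tp).
Local Notation reachable := (reachable pt tp).
Local Notation flow := (flow pt tp).

Lemma enabledP m t : enabled m t -> forall p, pt p t -> 0 < m p.
Proof. by move=> /forallP H p Hp; have := H p; rewrite Hp. Qed.

Lemma fire_post m v p : enabled m v -> fire m v p + (v == post p) = m p + (v == pre p).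
Proof.
move=> en; rewrite ffunE -hpost -hpre.
have := enabledP en (p:=p); case: (pt p v) => //=; last by lia.
move=> H; have := H isT; lia.
Qed.

Fixpoint chain (a : T) (s : seq P) (b : T) : bool :=
  if s is p :: s' then (pre p == a) && chain (post p) s' b else a == b.

Lemma chain_cat a s1 b s2 c : chain a s1 b -> chain b s2 c -> chain a (s1 ++ s2) c.
Proof.
elim: s1 a => [|p s1 IH] a /=; first by move=> /eqP ->.
by case/andP=> -> H1 H2; rewrite (IH _ H1 H2).
Qed.

Lemma chain_rcons a s p b : chain a s (pre p) -> post p = b -> chain a (rcons s p) b.
Proof. by move=> H1 H2; rewrite -cats1; apply: (chain_cat H1) => /=; rewrite H2 !eqxx. Qed.

Definition sumM (m : marking) (s : seq P) := \sum_(p <- s) m p.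

Lemma CH a s b m v : chain a s b -> enabled m v ->
  sumM (fire m v) s + (v == b) = sumM m s + (v == a).
Proof.
rewrite /sumM; elim: s a => [|p s IH] a /=.
  by move=> /eqP -> _; rewrite !big_nil.
case/andP=> /eqP Ha Hc en; rewrite !big_cons.
have := fire_post p en; have := IH _ Hc en; rewrite Ha; lia.
Qed.

Lemma cycle_inv a s m m' : chain a s a -> reachable m m' -> sumM m' s = sumM m s.
Proof.
move=> Hc; elim=> // m2 t _ IH en.
by have := CH Hc en; rewrite -IH => /addIn.
Qed.

Lemma two_inv a b s1 s2 m m' : chain a s1 b -> chain a s2 b -> reachable m m' ->
  sumM m' s1 + sumM m s2 = sumM m' s2 + sumM m s1.
Proof.
move=> H1 H2; elim=> [|m2 t _ IH en]; first by rewrite addnC.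
have := CH H1 en; have := CH H2 en; lia.
Qed.

Fixpoint places (d : seq node) : seq P :=
  if d is x :: d' then (if x is inl p then p :: places d' else places d') else [::].

Lemma mem_places p d : (p \in places d) = (inl p \in d).
Proof.
elim: d => [|x d IH] //=; case: x => [p'|u] /=; rewrite ?inE IH //.
Qed.

Lemma places_cat d1 d2 : places (d1 ++ d2) = places d1 ++ places d2.
Proof. by elim: d1 => [|[p|u] d1 IH] //=; rewrite IH. Qed.

Lemma uniq_places d : uniq d -> uniq (places d).
Proof.
elim: d => [|[p|u] d IH] //= /andP[Hn Hu]; rewrite ?IH ?andbT //.
by rewrite mem_places.
Qed.

Definition st (x : node) := match x with inl p => pre p | inr a => a end.
Definition en (x : node) := match x with inl p => post p | inr a => a end.

Lemma path_chain x rest : path flow x rest -> chain (st x) (places (x :: rest)) (en (last x rest)).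
Proof.
elim: rest x => [|y r IH] x /=.
  by case: x => [p|a] _ /=; rewrite !eqxx.
case/andP=> Hf Hp; have := IH _ Hp.
case: x Hf => [p|a]; case: y Hp => [p'|u] //= _.
- rewrite hpost => /eqP -> /=; by rewrite eqxx.
- by rewrite hpre => /eqP ->.
Qed.

Lemma succ_in x rest p : path flow x rest -> inl p \in x :: rest -> inl p != last x rest ->
  inr (post p) \in rest.
Proof.
elim: rest x => [|y r IH] x /=.
  by rewrite inE => _ /eqP ->; rewrite eqxx.
case/andP=> Hf Hp; rewrite inE; case: eqP => [Hx _ _|_ /= Hin Hl].
  rewrite -Hx in Hf.
  by case: y Hf Hp => [p'|u] //=; rewrite hpost => /eqP -> _; rewrite inE eqxx.
by rewrite inE (IH _ Hp Hin Hl) orbT.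
Qed.

Lemma mnorm_places m d : uniq d -> mnorm m d = sumM m (places d).
Proof.
move=> Hu; rewrite /sumM big_uniq ?uniq_places //.
by apply: eq_bigl => p; rewrite mem_places.
Qed.

Lemma sumM_mem (m : marking) s p : p \in s -> m p <= sumM m s.
Proof.
rewrite /sumM; elim: s => [|x s IH] //; rewrite inE big_cons.
case/orP=> [/eqP ->|/IH]; lia.
Qed.

Lemma sumM_cat (m : marking) s1 s2 : sumM m (s1 ++ s2) = sumM m s1 + sumM m s2.
Proof. by rewrite /sumM big_cat. Qed.

Lemma sumM0 (m : marking) s : (forall p, p \in s -> m p = 0) -> sumM m s = 0.
Proof. by move=> H; rewrite /sumM big1_seq // => p /andP[_ /H]. Qed.

Lemma sumM_le (m m' : marking) s : (forall p, p \in s -> m p <= m' p) -> sumM m s <= sumM m' s.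
Proof.
rewrite /sumM; elim: s => [|x s IH] H; rewrite ?big_nil ?big_cons //.
have := H x (mem_head _ _); have := IH (fun p Hp => H p (mem_behead (s:=x::s) Hp)); lia.
Qed.

Lemma count_le1 (s : seq P) (Q : pred P) (z : P) (c : bool) : uniq s ->
  (forall p, p \in s -> Q p -> p = z /\ c) -> count Q s <= c.
Proof.
elim: s => [|y s IH] //= /andP[Hn Hu] H.
have IH' := IH Hu (fun p Hp => H p (mem_behead (s:=y::s) Hp)).
case Qy: (Q y) => //=.
have [Hyz Hc] := H y (mem_head _ _) Qy; rewrite Hc.
suff -> : count Q s = 0 by [].
apply/eqP; rewrite -leqn0 leqNgt -has_count; apply/hasP => -[p Hp Qp].
have [Hpz _] := H p (mem_behead (s:=y::s) Hp) Qp.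
by move: Hn; rewrite Hyz -Hpz Hp.
Qed.


Inductive rk (m0 : marking) : nat -> marking -> Prop :=
| rk0 : rk m0 0 m0
| rkS k m t : rk m0 k m -> enabled m t -> rk m0 k.+1 (fire m t).

Definition E m0 t k := exists j m, j <= k /\ rk m0 j m /\ enabled m t.

Lemma reach_rk m0 m : reachable m0 m -> exists k, rk m0 k m.
Proof.
elim=> [|m1 t _ [k Hk] en]; first by exists 0; constructor.
by exists k.+1; apply: rkS.
Qed.

Lemma rk_reach m0 k m : rk m0 k m -> reachable m0 m.
Proof. elim=> [|k' m1 t _ IH en]; [exact: reach_refl | exact: reach_step]. Qed.

Lemma reach_E m0 m t : reachable m0 m -> enabled m t -> exists k, E m0 t k.
Proof. by move=> /reach_rk [k Hk] en; exists k, k, m. Qed.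

Lemma E_mon m0 t k k' : k <= k' -> E m0 t k -> E m0 t k'.
Proof. by move=> Hk [j [m [Hj H]]]; exists j, m; split=> //; apply: leq_trans Hk. Qed.

Lemma rk0_eq m0 m : rk m0 0 m -> m = m0.
Proof. by move=> H; inversion H. Qed.

Lemma E0 m0 t : E m0 t 0 -> enabled m0 t.
Proof.
case=> j [m [Hj [Hrk en]]]; move: Hj; rewrite leqn0 => /eqP Hj; subst j.
by rewrite -(rk0_eq Hrk).
Qed.

Lemma GT m0 j m p : rk m0 j m -> m0 p < m p ->
  exists j' m', j' < j /\ rk m0 j' m' /\ enabled m' (pre p).
Proof.
elim=> [|k m1 t Hrk IH en]; first by rewrite ltnn.
rewrite ffunE => H.
case: (ltnP (m0 p) (m1 p)) => h.
  by have [j' [m' [H1 H2]]] := IH h; exists j', m'; split=> //; apply: ltnW.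
case Htp: (tp t p) H; last by lia.
move: Htp; rewrite hpre => /eqP <- _.
by exists k, m1.
Qed.

Lemma GTE m0 p k : E m0 (post p) k -> m0 p = 0 -> 0 < k /\ E m0 (pre p) k.-1.
Proof.
case=> j [m [Hj [Hrk en]]] H0.
have Hm : m0 p < m p by rewrite H0; apply: (enabledP en); rewrite hpost.
have [j' [m' [H1 [H2 H3]]]] := GT Hrk Hm.
split; first by lia.
by exists j', m'; split=> //; lia.
Qed.

Lemma seq2E (a b c : node) s : a :: s ++ [:: b; c] = rcons (a :: s ++ [:: b]) c.
Proof. by rewrite /= rcons_cat. Qed.

Lemma core1 M0 k t q : E M0 t k -> post q = t -> M0 q = 0 ->
  exists tau s, enabled M0 tau /\
    elementary_path pt tp (inr tau :: s ++ [:: inl q; inr t]) /\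
    (forall p, inl p \in (inr tau :: s ++ [:: inl q; inr t]) -> M0 p = 0) /\
    (forall u, inr u \in (inr tau :: s ++ [:: inl q]) -> E M0 u k.-1).
Proof.
elim: k t q => [|k IH] t q HE Hq H0.
  have := enabledP (E0 HE) (p:=q); rewrite hpost Hq eqxx H0 => /(_ isT); by [].
case: (classic (E M0 t k)) => HEk.
  have [tau [s [H1 [H2 [H3 H4]]]]] := IH t q HEk Hq H0.
  exists tau, s; do 3 (split=> //).
  by move=> u /H4; apply: E_mon; apply: leq_pred.
have HE' : E M0 (post q) k.+1 by rewrite Hq.
have [_ HE1] := GTE HE' H0; rewrite /= in HE1.
case en1: (enabled M0 (pre q)).
  exists (pre q), [::]; split=> //; split.
    rewrite /elementary_path /= hpre hpost Hq !eqxx /= !inE /= andbT.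
    by apply/eqP => -[Ht]; apply: HEk; rewrite -Ht.
  split.
    by move=> p; rewrite !inE => /or3P[//|/eqP[->]|//].
  by move=> u; rewrite !inE => /orP[/eqP[->]|//].
move: en1 => /negbT /forallPn [q1]; rewrite negb_imply -leqNgt leqn0 => /andP[Hq1 /eqP Hz1].
have Hpq1 : post q1 = pre q by move: Hq1; rewrite hpost => /eqP.
have [tau [s [Hen [Hel [Hz Htr]]]]] := IH (pre q) q1 HE1 Hpq1 Hz1.
set d' := inr tau :: s ++ [:: inl q1; inr (pre q)] in Hel Hz Htr.
have Htrk : forall u, inr u \in d' -> E M0 u k.
  move=> u; rewrite /d' seq2E mem_rcons inE => /orP[/eqP [->] //|/Htr].
  by apply: E_mon; apply: leq_pred.
move: Hel => /andP[Hpath0 Hu].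
have Hpath : path flow (inr tau) (s ++ [:: inl q1; inr (pre q)]) by exact: Hpath0.
have Htnot : inr t \notin d' by apply/negP => /Htrk.
have Hqnot : inl q \notin d'.
  apply/negP => Hin.
  have := succ_in Hpath Hin; rewrite last_cat /= => /(_ isT).
  by rewrite Hq => Hin2; move: Htnot; rewrite /d' inE Hin2 orbT.
exists tau, (s ++ [:: inl q1; inr (pre q)]).
have Hd : inr tau :: (s ++ [:: inl q1; inr (pre q)]) ++ [:: inl q; inr t] = d' ++ [:: inl q; inr t].
  by [].
rewrite Hd; split=> //; split.
  rewrite /elementary_path; apply/andP; split.
    rewrite /d' /= cat_path Hpath last_cat /= hpre hpost Hq !eqxx //.
  by rewrite cat_uniq Hu /= (negbTE Hqnot) (negbTE Htnot).
split.
  move=> p; rewrite mem_cat => /orP[/Hz //|]; rewrite !inE => /orP[/eqP [->] //|//].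
move=> u; rewrite -cat1s catA mem_cat => /orP[|]; last by rewrite inE.
by move=> Hin; apply: Htrk; exact: Hin.
Qed.

Lemma reach_trans m1 m2 m3 : reachable m1 m2 -> reachable m2 m3 -> reachable m1 m3.
Proof. move=> H12; elim=> // m t _ IH en; exact: reach_step IH en. Qed.

Definition addm (X D : marking) : marking := [ffun p => X p + D p].

Lemma reach_pump X Y D : reachable X Y -> reachable (addm X D) (addm Y D).
Proof.
elim=> [|Y1 t _ IH en]; first exact: reach_refl.
have en' : enabled (addm Y1 D) t.
  by apply/forallP => p; apply/implyP => /(enabledP en); rewrite ffunE; lia.
have -> : addm (fire Y1 t) D = fire (addm Y1 D) t.
  apply/ffunP => p; rewrite !ffunE; case Hpt: (pt p t); last by lia.
  by have := enabledP en Hpt; lia.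
exact: reach_step IH en'.
Qed.

Lemma count0_all (Q : pred P) s : all (predC Q) s -> count Q s = 0.
Proof.
move=> H; apply/eqP; rewrite -leqn0 leqNgt -has_count; apply/hasP => -[p Hp Qp].
by move/allP: H => /(_ p Hp); rewrite /= Qp.
Qed.

Lemma mem_split (x : node) l : x \in l -> exists xs ys, l = xs ++ x :: ys.
Proof. by case/splitPr => xs ys; exists xs, ys. Qed.

Lemma is_path_suf xs (y : node) zs : is_path pt tp (xs ++ y :: zs) -> path flow y zs.
Proof.
case: xs => [|x xs] //=; rewrite cat_path => /andP[_] /=; by case/andP.
Qed.

Definition cluster_set (t : T) : {set node} :=
  [set y | match y with inl p => post p == t | inr u => u == t end].

Lemma cl_char (cl : {set node}) tcl : is_cluster pt cl -> inr tcl \in cl ->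
  forall p, (inl p \in cl) = (post p == tcl).
Proof.
case=> x [Hx [[Hc1 Hc2] Hmin]] Htcl p.
have Sclosed t : cluster_closed pt (cluster_set t).
  split=> [p' u|u p']; rewrite !inE hpost.
    by move=> /eqP <- /eqP ->.
  by move=> /eqP -> /eqP ->.
pose tx := match x with inl p => post p | inr u => u end.
have Hxin : x \in cluster_set tx by rewrite inE /tx; case: (x) => *.
have Hsub := Hmin _ Hxin (Sclosed tx).
have Htx : tcl = tx by have := subsetP Hsub _ Htcl; rewrite inE => /eqP.
apply/idP/idP.
  by move=> Hp; have := subsetP Hsub _ Hp; rewrite inE Htx.
by move=> /eqP Hp; apply: Hc2 Htcl _; rewrite hpost Hp.
Qed.

Section Perp.
Variables (mu mcl : marking) (tcl : T) (pstar : P).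
Hypothesis Hmcl : forall p, mcl p = (post p == tcl).
Hypothesis Hlive : live pt tp mu.
Hypothesis Hbnd : bounded pt tp mu.
Hypothesis Hhome : forall m, reachable mu m -> reachable m mcl.
Hypothesis Hwc : weakly_connected pt tp.

Lemma mcl_reach : reachable mu mcl.
Proof. exact: Hhome (reach_refl _ _ _). Qed.

Lemma tcl_en : enabled mcl tcl.
Proof. by apply/forallP => p; apply/implyP; rewrite hpost Hmcl eq_sym => ->. Qed.

Lemma liveE v : exists k, E mcl v k.
Proof. by have [m' [Hr en]] := Hlive mcl_reach v; exact: reach_E Hr en. Qed.

Lemma liveE_mu v : exists k, E mu v k.
Proof. by have [m' [Hr en]] := Hlive (reach_refl _ _ _) v; exact: reach_E Hr en. Qed.

Lemma sumM_mcl s : sumM mcl s = count (fun p => post p == tcl) s.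
Proof. by rewrite /sumM; elim: s => [|p s IH]; rewrite ?big_nil ?big_cons //= Hmcl IH. Qed.

Lemma pump_contra X0 D p0 : reachable mu X0 -> reachable X0 (addm X0 D) -> 0 < D p0 -> False.
Proof.
move=> H0 H1 Hp.
pose X k : marking := [ffun p => X0 p + k * D p].
have HX : forall k, reachable X0 (X k).
  elim=> [|k IH].
    have -> : X 0 = X0 by apply/ffunP => p; rewrite ffunE mul0n addn0.
    exact: reach_refl.
  apply: (reach_trans IH).
  have := reach_pump [ffun p => k * D p] H1.
  have -> : addm X0 [ffun p => k * D p] = X k by apply/ffunP => p; rewrite !ffunE.
  have -> : addm (addm X0 D) [ffun p => k * D p] = X k.+1.
    by apply/ffunP => p; rewrite !ffunE mulSn; lia.
  by [].
case: Hbnd => B HB.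
have := HB _ (reach_trans H0 (HX B.+1)) p0; rewrite ffunE.
have := leq_pmulr B.+1 Hp; lia.
Qed.

Lemma source_free v : exists p, post p = v.
Proof.
case: (pickP (fun p => post p == v)) => [p /eqP H|Hn]; first by exists p.
exfalso.
have env : forall m, enabled m v.
  by move=> m; apply/forallP => p; rewrite hpost eq_sym Hn.
case: (pickP (fun p => pre p == v)) => [p0 /eqP H0|Hn2].
  have Hr : forall k, reachable mu (iter k (fun m => fire m v) mu).
    by elim=> [|k IH]; [exact: reach_refl | exact: reach_step IH (env _)].
  have Hg : forall k, k <= iter k (fun m => fire m v) mu p0.
    elim=> //= k IH; rewrite ffunE hpost hpre H0 eqxx eq_sym Hn /=; lia.
  case: Hbnd => B HB.
  by have := HB _ (Hr B.+1) p0; have := Hg B.+1; lia.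
have := Hwc (inr v) (inl pstar); case/connectP => -[|z s] //= /andP[Hz _] _.
move: Hz; case: z => [p|u] //=.
by rewrite hpre hpost (eq_sym v) Hn2 (eq_sym v) Hn.
Qed.

Lemma backward k a : E mcl a k -> exists B, chain tcl B a /\ all (fun p => post p != tcl) B.
Proof.
elim: k a => [|k IH] a HE; (case: (eqVneq a tcl) => [->|Ha]; first by exists [::]; rewrite /= eqxx).
  have [p Hp] := source_free a.
  have H0 : mcl p = 0 by rewrite Hmcl Hp (negbTE Ha).
  by rewrite -Hp in HE; have [] := GTE HE H0.
have [p Hp] := source_free a.
have H0 : mcl p = 0 by rewrite Hmcl Hp (negbTE Ha).
rewrite -Hp in HE; have [_ HE'] := GTE HE H0.
have [B [HB HBa]] := IH _ HE'.
exists (rcons B p); split; first exact: chain_rcons HB Hp.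
by rewrite all_rcons HBa Hp Ha.
Qed.

Lemma sink_free u : u != tcl -> exists p, pre p = u.
Proof.
move=> Hu; case: (pickP (fun p => pre p == u)) => [p /eqP H|Hn]; first by exists p.
exfalso.
have Hsink : forall p, tp u p = false by move=> p; rewrite hpre eq_sym Hn.
have [k Hk] := liveE u; have [B [HB _]] := backward Hk.
have Hrem : forall M M', reachable M M' -> exists M'', reachable M M'' /\
    (forall p, M' p <= M'' p) /\ sumM M B <= sumM M'' B.
  move=> M M'; elim=> [|M1 v _ [M'' [H1 [H2 H3]]] env].
    by exists M; split; [exact: reach_refl | split].
  case: (eqVneq v u) => [->|Hvu].
    exists M''; split=> //; split=> // p; rewrite ffunE Hsink addn0; have := H2 p; lia.
  have env'' : enabled M'' v.
    by apply/forallP => p; apply/implyP => /(enabledP env); have := H2 p; lia.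
  exists (fire M'' v); split; first exact: reach_step H1 env''.
  split; first by move=> p; rewrite !ffunE; have := H2 p; lia.
  by have := CH HB env''; rewrite (negbTE Hvu); lia.
pose M1 := fire mcl tcl.
have R1 : reachable mcl M1 := reach_step (reach_refl _ _ _) tcl_en.
have Rmu1 : reachable mu M1 := reach_trans mcl_reach R1.
have [M'' [H1 [H2 H3]]] := Hrem _ _ (Hhome Rmu1).
have HC := CH HB tcl_en; rewrite eqxx eq_sym (negbTE Hu) in HC.
have [p0 Hp0 Hlt] : exists2 p0, p0 \in B & mcl p0 < M'' p0.
  apply/hasP; apply/negPn/negP => /hasPn Hn'.
  have H' : sumM M'' B <= sumM mcl B.
    by apply: sumM_le => p Hp; have := Hn' p Hp; rewrite /= -leqNgt.
  rewrite /M1 /= in HC H3; lia.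
pose D : marking := [ffun p => M'' p - mcl p].
have HM : addm mcl D = M'' by apply/ffunP => p; rewrite !ffunE; have := H2 p; lia.
apply: (pump_contra (X0:=mcl) (D:=D) (p0:=p0)) mcl_reach _ _.
  by rewrite HM; exact: reach_trans R1 H1.
by rewrite ffunE; lia.
Qed.

Lemma forward b : b != tcl -> exists F, chain b F tcl /\ count (fun p => post p == tcl) F <= 1.
Proof.
have [f Hf] : exists f : T -> nat, forall v, E mcl v (f v) := fin_all_exists liveE.
pose K := \max_(v : T) f v.
have HK : forall v, E mcl v K by move=> v; apply: E_mon (Hf v); exact: leq_bigmax.
suff H : forall n b, b != tcl -> (forall j, j < K - n -> ~ E mcl b j) ->
    exists F, chain b F tcl /\ count (fun p => post p == tcl) F <= 1.
  by move=> Hb; apply: (H K b Hb) => j; rewrite subnn.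
elim=> [|n IH] b' Hb' Hnot; have [p Hp] := sink_free Hb';
  (case: (eqVneq (post p) tcl) => Hw; first by exists [:: p]; rewrite /= Hp Hw !eqxx).
  have H0 : mcl p = 0 by rewrite Hmcl (negbTE Hw).
  have [HK0 HE'] := GTE (HK (post p)) H0.
  by exfalso; apply: (Hnot K.-1); [lia | rewrite -Hp].
have H0 : mcl p = 0 by rewrite Hmcl (negbTE Hw).
have [F [HF HFc]] : exists F, chain (post p) F tcl /\ count (fun p => post p == tcl) F <= 1.
  apply: IH => // j Hj HEj.
  have [Hj0 HE'] := GTE HEj H0.
  by apply: (Hnot j.-1); [lia | rewrite -Hp].
by exists (p :: F); rewrite /= Hp eqxx HF (negbTE Hw).
Qed.

Lemma part_i t p q : pt p t -> mu p = 1 -> pt q t -> mu q = 0 ->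
  exists tau d, en_q pt tp mu q t tau d /\ mnorm mu d = 0 /\
                inr tcl \notin belast (head (inr tcl) d) (behead d).
Proof.
move=> Hpt Hp1 Hq H0.
have Hpp : post p = t by move: Hpt; rewrite hpost => /eqP.
have Hpq : post q = t by move: Hq; rewrite hpost => /eqP.
have [k Hk] := liveE_mu t.
have [tau [s [H1 [H2 [H3 _]]]]] := core1 Hk Hpq H0.
exists tau, (inr tau :: s ++ [:: inl q; inr t]).
split; first by split=> //; split=> //; exists s.
split; first by rewrite /mnorm big1 // => p' /H3.
have -> : belast (head (inr tcl) (inr tau :: s ++ [:: inl q; inr t]))
   (behead (inr tau :: s ++ [:: inl q; inr t])) = inr tau :: s ++ [:: inl q].
  by rewrite /= -[s ++ _]/(s ++ [:: inl q] ++ [:: inr t]) catA cats1 belast_rcons.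
apply/negP => Hin.
move: H2; rewrite /elementary_path seq2E => /andP[Hpath Hu].
case: (eqVneq t tcl) => [Ht|Ht].
  by move: Hu; rewrite rcons_uniq Ht Hin.
have [xs [ys Hxy]] := mem_split Hin.
rewrite Hxy rcons_cat rcons_cons in Hpath Hu H3.
set rest := rcons ys (inr t) in Hpath Hu H3.
have Hp2 := is_path_suf Hpath.
have Hu2 : uniq (inr tcl :: rest) by move: Hu; rewrite cat_uniq => /and3P[_ _].
have Hch := path_chain Hp2; rewrite /rest /= last_rcons /= in Hch.
set alpha := places _ in Hch.
have Hpost_a : forall p', p' \in alpha -> post p' != tcl.
  move=> p' Hp'; rewrite mem_places in Hp'.
  have Hne : inl p' != last (inr tcl) rest by rewrite /rest last_rcons.
  have := succ_in Hp2 Hp' Hne => Hin2.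
  by apply/eqP => He; move: Hu2; rewrite /= -He Hin2.
have Hz_a : sumM mu alpha = 0.
  apply: sumM0 => p' Hp'; apply: H3; rewrite mem_places in Hp'.
  by rewrite seq2E Hxy rcons_cat mem_cat /= inE Hp' !orbT.
have [k2 Hk2] := liveE (pre p).
have [B [HB HBa]] := backward Hk2.
have Hpi := chain_rcons HB Hpp.
have HI := two_inv Hpi Hch mcl_reach.
have Z1 : sumM mcl (rcons B p) = 0.
  apply: sumM0 => p'; rewrite mem_rcons inE Hmcl => /orP[/eqP ->|Hp'].
    by rewrite Hpp (negbTE Ht).
  by move/allP: HBa => /(_ p' Hp') /negbTE ->.
have Z2 : sumM mcl alpha = 0.
  by apply: sumM0 => p' Hp'; rewrite Hmcl (negbTE (Hpost_a p' Hp')).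
have Hge : mu p <= sumM mu (rcons B p) by apply: sumM_mem; rewrite mem_rcons mem_head.
rewrite Z1 Z2 Hz_a !add0n in HI; rewrite -HI Hp1 in Hge; by [].
Qed.

Lemma part_ii d : elementary_path pt tp d -> inr tcl \notin d -> mnorm mu d <= 1.
Proof.
case: d => [|x rest] //= /andP[Hpath Hu] Hnot.
rewrite mnorm_places //.
set S := places (x :: rest).
have HS := path_chain Hpath; rewrite -/S in HS.
set b0 := en (last x rest) in HS.
pose z := match last x rest with inl pl => pl | inr _ => pstar end.
have HcS : count (fun p => post p == tcl) S <= (b0 == tcl).
  apply: (count_le1 (z := z)); first exact: uniq_places.
  move=> p Hp /eqP Hpt.
  have Hl : inl p = last x rest.
    apply/eqP; apply/negPn/negP => Hne.
    have Hp' : inl p \in x :: rest by rewrite -mem_places.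
    have := succ_in Hpath Hp' Hne; rewrite Hpt => Hin.
    by move: Hnot; rewrite inE Hin orbT.
  by rewrite /z /b0 -Hl /= Hpt eqxx.
have [k1 Hk1] := liveE (st x).
have [B [HB HBa]] := backward Hk1.
have HcB : count (fun p => post p == tcl) B = 0 by apply: count0_all.
case: (eqVneq b0 tcl) => Hb0.
  rewrite Hb0 in HS.
  have HC := chain_cat HB HS.
  have := cycle_inv HC mcl_reach; rewrite sumM_mcl count_cat sumM_cat => HH.
  rewrite Hb0 eqxx in HcS; lia.
have [F [HF HFc]] := forward Hb0.
have HC := chain_cat HB (chain_cat HS HF).
have := cycle_inv HC mcl_reach; rewrite sumM_mcl !count_cat !sumM_cat => HH.
rewrite (negbTE Hb0) in HcS; lia.
Qed.

End Perp.

End Aux.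

Unset Implicit Arguments.

Theorem proposition5p1 (P T : finType) (pt : P -> T -> bool) (tp : T -> P -> bool)
  (HT : is_Tnet pt tp) (mu : marking P) :
  (* (1) *)
  (forall t : T, (exists m, reachable pt tp mu m /\ enabled pt m t) ->
     forall q : P, pt q t -> mu q = 0 ->
     exists tau d, en_q pt tp mu q t tau d /\ mnorm mu d = 0) /\
  (* (2) *)
  (forall (cl : {set node P T}) (tcl : T),
     perpetual pt tp mu cl -> inr tcl \in cl ->
     (* (i) *)
     (forall t : T, (exists p, pt p t /\ mu p = 1) ->
        forall q : P, pt q t -> mu q = 0 ->
        exists tau d, en_q pt tp mu q t tau d /\ mnorm mu d = 0 /\
                      inr tcl \notin belast (head (inr tcl) d) (behead d)) /\
     (* (ii) *)
     (forall d : seq (node P T), elementary_path pt tp d -> inr tcl \notin d ->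
        mnorm mu d <= 1)).
Proof.
have [pre Hpre] : exists pre : P -> T, forall p t, tp t p = (t == pre p).
  apply: (@fin_all_exists P (fun _ => T) (fun p pr => forall t, tp t p = (t == pr))) => p.
  have := (proj2 HT p).1 => /eqP /cards1P [x Hx].
  by exists x => t; rewrite -in_set1 -Hx inE.
have [post Hpost] : exists post : P -> T, forall p t, pt p t = (t == post p).
  apply: (@fin_all_exists P (fun _ => T) (fun p pr => forall t, pt p t = (t == pr))) => p.
  have := (proj2 HT p).2 => /eqP /cards1P [x Hx].
  by exists x => t; rewrite -in_set1 -Hx inE.
split.
  move=> t [m [Hr en]] q Hq H0.
  have [k Hk] := reach_E Hr en.
  have Hpq : post q = t by move: Hq; rewrite Hpost => /eqP.
  have [tau [s [H1 [H2 [H3 _]]]]] := core1 Hpre Hpost Hk Hpq H0.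
  exists tau, (inr tau :: s ++ [:: inl q; inr t]).
  split; first by split=> //; split=> //; exists s.
  by rewrite /mnorm big1 // => p /H3.
move=> cl tcl [Hlive [Hbnd [Hcl Hhome]]] Htcl.
have Hmcl : forall p, mu_cl cl p = (post p == tcl).
  by move=> p; rewrite ffunE (cl_char Hpost Hcl Htcl).
have Hh : forall m, reachable pt tp mu m -> reachable pt tp m (mu_cl cl) := Hhome.
split.
  move=> t [p [Hpt Hp1]] q Hq H0.
  exact: (part_i Hpre Hpost p Hmcl Hlive Hbnd Hh (proj1 HT) Hpt Hp1 Hq H0).
move=> d Hd Hn.
case: (pickP (@predT P)) => [ps _|Hnone].
  exact: (part_ii Hpre Hpost ps Hmcl Hlive Hbnd Hh (proj1 HT) Hd Hn).
by rewrite /mnorm big1 // => p; have := Hnone p.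
Qed.
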